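(* Let $K,L\subseteq S$ with $k<l$ for all $k\in K$, $l\in L$. Then in $A$: $$\tau^-_K\tau^-_L=\sum_{i=1}^{\#K}(-1)^{\#K-i}\tau^-_{(K\cup L)\setminus\{k_i\}}=\sum_{i=1}^{\#L}(-1)^{i-1}\tau^-_{(K\cup L)\setminus\{l_i\}}.$$
   Context: $S$ is a finite set with a total order $<$, $R$ a commutative ring with $1$, $q\in R$, $A=R\langle t_s\mid s\in S\rangle$ the free associative algebra. Subsets are enumerated increasingly, $K=\{k_1<\dots<k_{\#K}\}$, etc. For $J=\{j_1<\dots<j_{\#J}\}$, $t_J=t_{j_1}\cdots t_{j_{\#J}}$; for $I=\{j_{\alpha_1}<\dots<j_{\alpha_{\#I}}\}\subseteq J$, $\ell_J(I)=\sum_\nu(\alpha_\nu-\nu)$; $\tau^-_J=\sum_{I\subseteq J,\ \#I\text{ odd}}(-1)^{\ell_J(I)}(-q)^{(\#I-1)/2}t_{J\setminus I}$. *)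

(* Defs.v *)
From HB Require Import structures.
From mathcomp Require Import all_boot all_order all_algebra.
Set Implicit Arguments. Unset Strict Implicit. Unset Printing Implicit Defensive.
Import Order.TTheory GRing.Theory.
Local Open Scope ring_scope.

Section FreeAlg.
Variables (d : Order.disp_t) (S : finOrderType d) (R : comPzRingType).

(* Elements of the free associative algebra R<t_s | s in S> are represented
   by their coefficient functions on words (seq S); a polynomial is such a
   function with finite support. *)
Definition word := seq S.
Definition FA := word -> R.

Definition FAone : FA := fun w => (w == [::])%:R.
Definition FAgen (s : S) : FA := fun w => (w == [:: s])%:R.
Definition FAmul (f g : FA) : FA :=
  fun w => \sum_(i < (size w).+1) f (take i w) * g (drop i w).

Definition senum (J : {set S}) : seq S := sort <=%O (enum J).

Definition tmon (J : {set S}) : FA := foldr (fun s p => FAmul (FAgen s) p) FAone (senum J).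

(* l_J(I) = sum_nu (alpha_nu - nu), where the nu-th element of I is the
   alpha_nu-th element of J (positions shifted to 0-based on both sides). *)
Definition ellJ (J I : {set S}) : nat :=
  \sum_(x <- senum I) (index x (senum J) - index x (senum I))%N.

Definition tauminus (q : R) (J : {set S}) : FA :=
  fun w => \sum_(I in powerset J | odd #|I|)
     (-1) ^+ (ellJ J I) * (- q) ^+ ((#|I|).-1./2) * tmon (J :\: I) w.

End FreeAlg.

(* Main.v *)
Require Import Defs.
From HB Require Import structures.
From mathcomp Require Import all_boot all_order all_algebra ring.
From Stdlib Require Import FunctionalExtensionality.
Import Order.TTheory GRing.Theory.
Set Implicit Arguments. Unset Strict Implicit. Unset Printing Implicit Defensive.

Section Helpers.
Variables (d : Order.disp_t) (S : finOrderType d) (R : comPzRingType).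
Local Open Scope ring_scope.

Lemma big_senum (A : {set S}) (F : S -> R) :
  \sum_(x <- senum A) F x = \sum_(x in A) F x.
Proof. by rewrite /senum (perm_big _ (permEl (perm_sort _ _))) big_enum. Qed.

Lemma big_senumN (A : {set S}) (F : S -> nat) :
  (\sum_(x <- senum A) F x = \sum_(x in A) F x)%N.
Proof. by rewrite /senum (perm_big _ (permEl (perm_sort _ _))) big_enum. Qed.

Lemma mem_senum (A : {set S}) x : (x \in senum A) = (x \in A).
Proof. by rewrite /senum mem_sort mem_enum. Qed.

Lemma senum_uniq (A : {set S}) : uniq (senum A).
Proof. by rewrite /senum sort_uniq enum_uniq. Qed.

Lemma senum_lt (A : {set S}) : sorted <%O (senum A).
Proof. by rewrite /senum sort_lt_sorted enum_uniq. Qed.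

Lemma size_senum (A : {set S}) : size (senum A) = #|A|.
Proof. by rewrite /senum size_sort cardE. Qed.

Definition cnt (A : {set S}) (x : S) : nat := (\sum_(y in A) ((y < x)%O : nat))%N.

Lemma index_lt_count (s : seq S) x : pairwise <%O s -> x \in s ->
  index x s = (\sum_(y <- s) ((y < x)%O : nat))%N.
Proof.
elim: s => [//|y s IH] /= /andP [Hy Hs]; rewrite in_cons big_cons.
case: eqVneq => [->|nxy] /=.
  rewrite ltxx add0n big1_seq // => z /= zs.
  by move/allP: Hy => /(_ z zs) /lt_gtF ->.
move=> xs; rewrite IH //.
by move/allP: Hy => /(_ x xs) ->.
Qed.

Lemma index_senum (A : {set S}) x : x \in A -> index x (senum A) = cnt A x.
Proof.
move=> xA; rewrite index_lt_count ?big_senumN //.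
  by rewrite -lt_sorted_pairwise senum_lt.
by rewrite mem_senum.
Qed.

Lemma senum_cat (A B : {set S}) : (forall a b, a \in A -> b \in B -> (a < b)%O) ->
  senum (A :|: B) = senum A ++ senum B.
Proof.
move=> AB.
have -> : senum (A :|: B) = sort <=%O (senum A ++ senum B).
  apply/perm_sort_leP; apply: uniq_perm.
  - exact: enum_uniq.
  - rewrite cat_uniq !senum_uniq /= andbT; apply/hasPn => x.
    rewrite !mem_senum => xB; apply/negP => xA.
    by have := AB x x xA xB; rewrite ltxx.
  - by move=> x; rewrite mem_cat !mem_senum mem_enum inE.
apply: sort_le_id; rewrite le_sorted_pairwise pairwise_cat.
rewrite -!le_sorted_pairwise /senum !sort_le_sorted !andbT.
apply/allrelP => a b aA bB; apply: ltW; apply: AB; by rewrite -mem_senum.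
Qed.

End Helpers.


Section Helpers2.
Variables (d : Order.disp_t) (S : finOrderType d) (R : comPzRingType).
Local Open Scope ring_scope.

Lemma FAmulE (f g : FA S R) w :
  FAmul f g w = \sum_(i < (size w).+1) f (take i w) * g (drop i w).
Proof. by []. Qed.

Lemma foldr_gen (s : seq S) (w : seq S) :
  foldr (fun x p => FAmul (@FAgen d S R x) p) (@FAone d S R) s w = (w == s)%:R.
Proof.
elim: s w => [//|x s IH] w /=.
rewrite FAmulE; case: w => [|y w].
  by rewrite big_ord_recl big_ord0 /= /FAgen /= mul0r addr0.
rewrite big_ord_recl /FAgen /= mul0r add0r big_ord_recl /=.
rewrite drop0 take0 IH; case: w => [|z w].
  by rewrite big_ord0 addr0 -natrM mulnb !eqseq_cons andbT.
rewrite big1 ?addr0; last by move=> i _; rewrite add0n /bump leq0n add1n /= eqseq_cons andbF mul0r.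
by rewrite -natrM mulnb !eqseq_cons andbT.
Qed.

Lemma tmonE (J : {set S}) w : tmon R J w = (w == senum J)%:R.
Proof. exact: foldr_gen. Qed.

Lemma sum_ord_eq n k : (k < n)%N -> \sum_(i < n) (((i:nat) == k) : nat)%:R = 1 :> R.
Proof.
move=> Hk; rewrite (bigD1 (Ordinal Hk)) //= eqxx big1 ?addr0 // => i ne.
have -> : ((i : nat) == k) = false.
  by apply/negbTE; apply: contra ne => /eqP e; apply/eqP/val_inj.
by [].
Qed.

Lemma mono_mul (s t w : seq S) :
  \sum_(i < (size w).+1) ((take i w == s) : nat)%:R * ((drop i w == t) : nat)%:R
   = ((w == s ++ t) : nat)%:R :> R.
Proof.
rewrite (eq_bigr (fun i : 'I_(size w).+1 => ((((i:nat) == size s) && (w == s ++ t)) : nat)%:R)); last first.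
  move=> i _; rewrite -natrM mulnb; congr (_ %:R); congr nat_of_bool.
  apply/andP/andP => [[/eqP Ht /eqP Hd]|[/eqP Hi /eqP Hw]]; split.
  - by rewrite -Ht size_takel // -ltnS.
  - by rewrite -Ht -Hd cat_take_drop.
  - by rewrite Hi Hw take_size_cat.
  - by rewrite Hi Hw drop_size_cat.
case: eqVneq => Hw.
  under eq_bigr do rewrite andbT.
  by rewrite sum_ord_eq // Hw size_cat ltnS leq_addr.
by rewrite big1 // => i _; rewrite andbF.
Qed.

Lemma tmon_mul (A B : {set S}) w :
  FAmul (tmon R A) (tmon R B) w = ((w == senum A ++ senum B) : nat)%:R.
Proof. by rewrite FAmulE -mono_mul; apply: eq_bigr => i _; rewrite !tmonE. Qed.

End Helpers2.


Section Helpers3.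
Variables (d : Order.disp_t) (S : finOrderType d) (R : comPzRingType) (q : R).
Local Open Scope ring_scope.

Definition coef (J I : {set S}) : R := (-1) ^+ (ellJ J I) * (- q) ^+ ((#|I|).-1./2).

Lemma tauE J w : tauminus q J w = \sum_(I in powerset J | odd #|I|) coef J I * tmon R (J :\: I) w.
Proof. by []. Qed.

Lemma tau_mul K L w : FAmul (tauminus q K) (tauminus q L) w =
  \sum_(I in powerset K | odd #|I|) \sum_(I' in powerset L | odd #|I'|)
     coef K I * coef L I' * FAmul (tmon R (K :\: I)) (tmon R (L :\: I')) w.
Proof.
rewrite FAmulE.
under eq_bigr do rewrite !tauE mulr_suml.
under eq_bigr do under eq_bigr do rewrite mulr_sumr.
rewrite exchange_big; apply: eq_bigr => I _.
rewrite exchange_big; apply: eq_bigr => I' _.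
by rewrite FAmulE mulr_sumr; apply: eq_bigr => i _; rewrite mulrACA.
Qed.

End Helpers3.


Section Helpers4.
Variables (d : Order.disp_t) (S : finOrderType d).

Lemma subimp (A B : {set S}) x : A \subset B -> (x \in A) ==> (x \in B).
Proof. by move=> sAB; apply/implyP => /(subsetP sAB). Qed.

Lemma setS1 (K L I I' X0 : {set S}) : (forall x, ~~ ((x \in K) && (x \in L))) ->
  I \subset K -> I' \subset L -> X0 \subset K :|: L ->
  ((K :\: I) :|: (L :\: I') == X0) = (I == K :\: X0) && (I' == L :\: X0).
Proof.
move=> dKL sI sI' sX.
apply/eqP/andP => [<-|[/eqP -> /eqP ->]]; [split; apply/eqP/setP => x | apply/setP => x];
  move: (dKL x) (subimp x sI) (subimp x sI') (subimp x sX); rewrite !inE;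
  by case: (x \in K); case: (x \in L); case: (x \in I); case: (x \in I'); case: (x \in X0).
Qed.

Lemma setS2 (M I X0 : {set S}) k : k \in M -> I \subset M :\ k -> X0 \subset M ->
  ((M :\ k) :\: I == X0) = (k \in M :\: X0) && (I == (M :\: X0) :\ k).
Proof.
move=> kM sI sX.
apply/eqP/andP => [<-|[kJ /eqP ->]].
  split; first by rewrite !inE eqxx kM /= andbF.
  apply/eqP/setP => x; move: (subimp x sI) (subimp x sX); rewrite !inE.
  by case: (x == k); case: (x \in M); case: (x \in I).
apply/setP => x; move: kJ (subimp x sX); rewrite !inE.
case: eqVneq => [->|]; first by case: (k \in X0).
by case: (x \in M); case: (x \in X0).
Qed.

End Helpers4.


Section Nat.
Variables (d : Order.disp_t) (S : finOrderType d).

Lemma sum_disjU (A B : {set S}) (F : S -> nat) : (forall x, ~~ ((x \in A) && (x \in B))) ->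
  (\sum_(x in A :|: B) F x = \sum_(x in A) F x + \sum_(x in B) F x)%N.
Proof.
move=> dAB; rewrite (big_setID A); congr (_ + _); apply: eq_bigl => x;
  move: (dAB x); rewrite !inE; by case: (x \in A); case: (x \in B).
Qed.

Lemma cnt_split (J I : {set S}) x : I \subset J -> cnt J x = (cnt I x + cnt (J :\: I) x)%N.
Proof.
move=> sIJ; rewrite /cnt (big_setID I); congr (_ + _).
by apply: eq_bigl => y; rewrite (setIidPr sIJ).
Qed.

Lemma ellJE (J I : {set S}) : I \subset J -> ellJ J I = (\sum_(x in I) cnt (J :\: I) x)%N.
Proof.
move=> sIJ; rewrite /ellJ big_senumN; apply: eq_bigr => x xI.
rewrite !index_senum //; last exact: (subsetP sIJ).
by rewrite (cnt_split x sIJ) addKn.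
Qed.

Lemma cnt0 (A : {set S}) x : (forall y, y \in A -> ~~ (y < x)%O) -> cnt A x = 0%N.
Proof. by move=> H; rewrite /cnt big1 // => y /H /negbTE ->. Qed.

Lemma cntall (A : {set S}) x : (forall y, y \in A -> (y < x)%O) -> cnt A x = #|A|.
Proof. by move=> H; rewrite /cnt -sum1_card; apply: eq_bigr => y /H ->. Qed.

Lemma cnt_lt_card (A : {set S}) x : x \in A -> (cnt A x < #|A|)%N.
Proof.
move=> xA; rewrite /cnt -sum1_card (bigD1 x) //= [in X in (_ < X)%N](bigD1 x) //= ltxx add0n add1n ltnS.
apply: leq_sum => y _; by case: (y < x)%O.
Qed.

Variables (K L JK JL : {set S}).
Hypothesis HKL : forall k l, k \in K -> l \in L -> (k < l)%O.
Hypothesis sJK : JK \subset K.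
Hypothesis sJL : JL \subset L.

Lemma dKL x : ~~ ((x \in K) && (x \in L)).
Proof. by apply/negP => /andP [xK xL]; move: (HKL xK xL); rewrite ltxx. Qed.

Lemma MJ : (K :|: L) :\: (JK :|: JL) = (K :\: JK) :|: (L :\: JL).
Proof.
apply/setP => x; move: (dKL x) (subimp x sJK) (subimp x sJL); rewrite !inE.
by case: (x \in K); case: (x \in L); case: (x \in JK); case: (x \in JL).
Qed.

Lemma sJM : JK :|: JL \subset K :|: L.
Proof. exact: setUSS. Qed.

Lemma dJ x : ~~ ((x \in JK) && (x \in JL)).
Proof. by move: (dKL x) (subimp x sJK) (subimp x sJL); case: (x \in K); case: (x \in L); case: (x \in JK); case: (x \in JL). Qed.

Lemma dC x : ~~ ((x \in K :\: JK) && (x \in L :\: JL)).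
Proof. by move: (dKL x); rewrite !inE; case: (x \in K); case: (x \in L); case: (x \in JK); case: (x \in JL). Qed.

Lemma cntMJ x : cnt ((K :|: L) :\: (JK :|: JL)) x = (cnt (K :\: JK) x + cnt (L :\: JL) x)%N.
Proof. by rewrite MJ /cnt sum_disjU //; apply: dC. Qed.

Lemma cntMJ_K k : k \in K -> cnt ((K :|: L) :\: (JK :|: JL)) k = cnt (K :\: JK) k.
Proof.
move=> kK; rewrite cntMJ (@cnt0 (L :\: JL)) ?addn0 // => y; rewrite inE => /andP [_ yL].
by apply/negP => /lt_gtF; rewrite (HKL kK yL).
Qed.

Lemma cntMJ_L l : l \in L -> cnt ((K :|: L) :\: (JK :|: JL)) l = (#|K :\: JK| + cnt (L :\: JL) l)%N.
Proof.
move=> lL; rewrite cntMJ cntall // => y; rewrite inE => /andP [_ yK]; exact: HKL.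
Qed.

Lemma ellM : ellJ (K :|: L) (JK :|: JL) = (ellJ K JK + ellJ L JL + #|K :\: JK| * #|JL|)%N.
Proof.
rewrite !ellJE // ?sJM // sum_disjU; last exact: dJ.
rewrite -addnA; congr (_ + _).
  by apply: eq_bigr => x xJ; rewrite cntMJ_K //; apply: (subsetP sJK).
rewrite (eq_bigr (fun x => #|K :\: JK| + cnt (L :\: JL) x))%N; last first.
  by move=> x xJ; rewrite cntMJ_L //; apply: (subsetP sJL).
by rewrite big_split /= sum_nat_const addnC mulnC.
Qed.

Lemma ellD1 k : k \in JK :|: JL ->
  (ellJ ((K :|: L) :\ k) ((JK :|: JL) :\ k) + cnt ((K :|: L) :\: (JK :|: JL)) k = ellJ (K :|: L) (JK :|: JL))%N.
Proof.
move=> kJ; rewrite !ellJE ?sJM //; last by apply: setSD; exact: sJM.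
rewrite [in RHS](big_setD1 k kJ) /= addnC; congr (_ + _).
apply: eq_bigr => x _; congr cnt.
apply/setP => y; move: kJ; rewrite !inE.
by case: eqVneq => [->|_] /= ; [move=> -> | ].
Qed.

End Nat.


Section Ring.
Variables (d : Order.disp_t) (S : finOrderType d) (R : comPzRingType).
Local Open Scope ring_scope.

Lemma sign_eq m n : odd m = odd n -> (-1) ^+ m = (-1) ^+ n :> R.
Proof. by move=> H; rewrite -signr_odd H signr_odd. Qed.

Lemma signB m n : (m <= n)%N -> (-1) ^+ (n - m) = (-1) ^+ n * (-1) ^+ m :> R.
Proof.
by move=> H; rewrite -[in RHS](subnK H) exprD -mulrA -expr2 sqrr_sign mulr1.
Qed.

Lemma signDinv a b n : (a + b)%N = n -> (-1) ^+ a = (-1) ^+ n * (-1) ^+ b :> R.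
Proof.
by move=> <-; rewrite exprD -mulrA -expr2 sqrr_sign mulr1.
Qed.

Lemma sum_index (s : seq S) (F : nat -> R) : uniq s ->
  \sum_(x <- s) F (index x s) = \sum_(i < size s) F i.
Proof.
elim: s F => [|y s IH] F /=; first by rewrite big_nil big_ord0.
move=> /andP [ys us]; rewrite big_cons big_ord_recl eqxx; congr (_ + _).
rewrite -(IH (fun i => F i.+1)) //; apply: eq_big_seq => x xs.
by case: eqVneq xs ys => [->|] // ->.
Qed.

Lemma sum_sign_ord n : \sum_(i < n) (-1) ^+ i = (odd n)%:R :> R.
Proof.
elim: n => [|n IH]; first by rewrite big_ord0.
rewrite big_ord_recr /= IH -signr_odd; case: (odd n) => /=.
  by rewrite expr1 addrN.
by rewrite expr0 add0r.
Qed.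

Lemma sum_sign_cnt (A : {set S}) : \sum_(k in A) (-1) ^+ (cnt A k) = (odd #|A|)%:R :> R.
Proof.
rewrite -big_senum -size_senum -sum_sign_ord -(sum_index (fun i => (-1) ^+ i)) ?senum_uniq //.
by apply: eq_big_seq => x; rewrite mem_senum => xA; rewrite index_senum.
Qed.

Lemma pick_sum (T : finType) (P : pred T) (F : T -> R) a :
  \sum_(i | P i) F i * ((i == a) : nat)%:R = ((P a) : nat)%:R * F a.
Proof.
rewrite big_mkcond (bigD1 a) //= eqxx mulr1 big1 ?addr0.
  by case: (P a); rewrite ?mul1r ?mul0r.
by move=> i /negbTE ->; rewrite mulr0; case: (P i).
Qed.

Lemma odd_half n : odd n -> n = (n./2).*2.+1.
Proof. by move=> H; rewrite -[in LHS](odd_double_half n) H add1n. Qed.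

End Ring.


Section Core.
Variables (d : Order.disp_t) (S : finOrderType d) (R : comPzRingType) (q : R).
Variables (K L JK JL : {set S}).
Hypothesis HKL : forall k l, k \in K -> l \in L -> (k < l)%O.
Hypothesis sJK : JK \subset K.
Hypothesis sJL : JL \subset L.
Local Open Scope ring_scope.

Lemma cardJ : #|JK :|: JL| = (#|JK| + #|JL|)%N.
Proof. by rewrite -!sum1_card sum_disjU //; apply: dJ HKL sJK sJL. Qed.

Lemma cardJk k : k \in JK :|: JL -> #|(JK :|: JL) :\ k| = (#|JK| + #|JL|).-1.
Proof. by move=> kJ; rewrite -cardJ (cardsD1 k (JK :|: JL)) kJ. Qed.

Lemma core1 :
 ((((JK \in powerset K) && odd #|JK|) && ((JL \in powerset L) && odd #|JL|)) : nat)%:R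
   * (coef q K JK * coef q L JL)
 = \sum_(k <- senum K) (-1) ^+ (#|K| - (index k (senum K)).+1) *
    ((((k \in JK :|: JL) : nat)%:R) *
     (((((JK :|: JL) :\ k \in powerset ((K :|: L) :\ k)) && odd #|(JK :|: JL) :\ k|) : nat)%:R
      * coef q ((K :|: L) :\ k) ((JK :|: JL) :\ k))).
Proof.
rewrite big_senum (big_setID JK) /= (setIidPr sJK).
rewrite [X in _ + X]big1 ?addr0; last first.
  move=> k; rewrite inE => /andP [nJK kK]; rewrite inE (negbTE nJK) /=.
  have -> : (k \in JL) = false.
    by apply/negP => /(subsetP sJL) kL; move: (dKL HKL k); rewrite kK kL.
  by rewrite mul0r mulr0.
rewrite (eq_bigr (fun k => (- (-1) ^+ #|K| * (-1) ^+ ellJ (K :|: L) (JK :|: JL) * (odd (#|JK| + #|JL|).-1)%:R * (- q) ^+ ((#|JK| + #|JL|).-1.-1./2)) * (-1) ^+ (cnt JK k))); last first.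
  move=> k kJK; have kK : k \in K by apply: (subsetP sJK).
  have kJ : k \in JK :|: JL by rewrite inE kJK.
  rewrite kJ mul1r powersetE (setSD _ (sJM sJK sJL)) /= /coef (cardJk kJ).
  rewrite index_senum // (signB _ (cnt_lt_card kK)).
  rewrite (signDinv R (ellD1 sJK sJL kJ)) (cntMJ_K HKL) // (cnt_split k sJK).
  rewrite exprS exprD.
  have E : (-1) ^+ cnt (K :\: JK) k * (-1) ^+ cnt (K :\: JK) k = 1 :> R by rewrite -expr2 sqrr_sign.
  transitivity (((-1) ^+ cnt (K :\: JK) k * (-1) ^+ cnt (K :\: JK) k) *
    ((- (-1) ^+ #|K| * (-1) ^+ ellJ (K :|: L) (JK :|: JL) * (odd (#|JK| + #|JL|).-1)%:R * (- q) ^+ ((#|JK| + #|JL|).-1.-1./2)) * (-1) ^+ (cnt JK k))); last by rewrite E mul1r.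
  move: (odd _)%:R => o. ring.
rewrite -mulr_sumr sum_sign_cnt.
rewrite !powersetE sJK sJL /= /coef (ellM HKL sJK sJL) -(cardsID JK K) (setIidPr sJK).
move: (ellJ K JK) (ellJ L JL) #|K :\: JK| => lK lL c.
case Ha: (odd #|JK|); last by rewrite /= !mulr0n mul0r mulr0.
rewrite (odd_half Ha); move: (#|JK|./2) => x.
case Hb: (odd #|JL|); last first.
  by rewrite /= addSn /= oddD odd_double Hb /= ?mulr0n ?mul0r ?mulr0 ?mul0r.
rewrite (odd_half Hb); move: (#|JL|./2) => y.
rewrite addSn /= addnS -doubleD /= !doubleK odd_double /= mul1r mulr1 mulr1 (exprD (- q)).
have Hs : - (-1) ^+ (x.*2 + c).+1 * (-1) ^+ (lK + lL + c * y.*2.+1) = (-1) ^+ lK * (-1) ^+ lL :> R.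
  rewrite -mulN1r -exprS -!exprD; apply: sign_eq.
  rewrite !oddD !oddM /= !oddD !odd_double /=; by case: (odd c); case: (odd lK); case: (odd lL).
transitivity ((-1) ^+ lK * (-1) ^+ lL * ((- q) ^+ x * (- q) ^+ y)); first by ring.
rewrite -Hs; ring.
Qed.

Lemma core2 :
 ((((JK \in powerset K) && odd #|JK|) && ((JL \in powerset L) && odd #|JL|)) : nat)%:R
   * (coef q K JK * coef q L JL)
 = \sum_(l <- senum L) (-1) ^+ (index l (senum L)) *
    ((((l \in JK :|: JL) : nat)%:R) *
     (((((JK :|: JL) :\ l \in powerset ((K :|: L) :\ l)) && odd #|(JK :|: JL) :\ l|) : nat)%:R
      * coef q ((K :|: L) :\ l) ((JK :|: JL) :\ l))).
Proof.
rewrite big_senum (big_setID JL) /= (setIidPr sJL).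
rewrite [X in _ + X]big1 ?addr0; last first.
  move=> k; rewrite inE => /andP [nJL kL]; rewrite inE (negbTE nJL) orbF.
  have -> : (k \in JK) = false.
    by apply/negP => /(subsetP sJK) kK; move: (dKL HKL k); rewrite kK kL.
  by rewrite mul0r mulr0.
rewrite (eq_bigr (fun k => ((-1) ^+ #|K :\: JK| * (-1) ^+ ellJ (K :|: L) (JK :|: JL) * (odd (#|JK| + #|JL|).-1)%:R * (- q) ^+ ((#|JK| + #|JL|).-1.-1./2)) * (-1) ^+ (cnt JL k))); last first.
  move=> k kJL; have kL : k \in L by apply: (subsetP sJL).
  have kJ : k \in JK :|: JL by rewrite inE kJL orbT.
  rewrite kJ mul1r powersetE (setSD _ (sJM sJK sJL)) /= /coef (cardJk kJ).
  rewrite index_senum //.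
  rewrite (signDinv R (ellD1 sJK sJL kJ)) (cntMJ_L HKL) // (cnt_split k sJL).
  rewrite !exprD.
  have E : (-1) ^+ cnt (L :\: JL) k * (-1) ^+ cnt (L :\: JL) k = 1 :> R by rewrite -expr2 sqrr_sign.
  transitivity (((-1) ^+ cnt (L :\: JL) k * (-1) ^+ cnt (L :\: JL) k) *
    (((-1) ^+ #|K :\: JK| * (-1) ^+ ellJ (K :|: L) (JK :|: JL) * (odd (#|JK| + #|JL|).-1)%:R * (- q) ^+ ((#|JK| + #|JL|).-1.-1./2)) * (-1) ^+ (cnt JL k))); last by rewrite E mul1r.
  move: (odd _)%:R => o. ring.
rewrite -mulr_sumr sum_sign_cnt.
rewrite !powersetE sJK sJL /= /coef (ellM HKL sJK sJL).
move: (ellJ K JK) (ellJ L JL) #|K :\: JK| => lK lL c.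
case Hb: (odd #|JL|); last by rewrite /= andbF !mulr0n mul0r mulr0.
rewrite (odd_half Hb); move: (#|JL|./2) => y.
case Ha: (odd #|JK|); last first.
  by rewrite /= addnS /= oddD odd_double Ha /= ?mulr0n ?mul0r ?mulr0 ?mul0r.
rewrite (odd_half Ha); move: (#|JK|./2) => x.
rewrite addSn /= addnS -doubleD /= !doubleK odd_double /= mul1r mulr1 mulr1 (exprD (- q)).
have Hs : (-1) ^+ c * (-1) ^+ (lK + lL + c * y.*2.+1) = (-1) ^+ lK * (-1) ^+ lL :> R.
  rewrite -!exprD; apply: sign_eq.
  rewrite !oddD !oddM /= ?oddD !odd_double /=; by case: (odd c); case: (odd lK); case: (odd lL).
transitivity ((-1) ^+ lK * (-1) ^+ lL * ((- q) ^+ x * (- q) ^+ y)); first by ring.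
rewrite -Hs; ring.
Qed.

End Core.


Section Main.
Variables (d : Order.disp_t) (S : finOrderType d) (R : comPzRingType) (q : R).
Variables (K L : {set S}).
Hypothesis HKL : forall k l, k \in K -> l \in L -> (k < l)%O.
Local Open Scope ring_scope.

Lemma extract (Y : {set S}) (w : seq S) :
  ((w == senum Y) : nat)%:R = ((w == senum [set x in w]) : nat)%:R * ((Y == [set x in w]) : nat)%:R :> R.
Proof.
rewrite -natrM mulnb; congr (_ %:R); congr nat_of_bool.
apply/idP/andP => [/eqP ->|[/eqP H /eqP ->]] //.
have -> : [set x in senum Y] = Y by apply/setP => x; rewrite inE mem_senum.
by rewrite !eqxx.
Qed.

Lemma lhs_eq w : FAmul (tauminus q K) (tauminus q L) w =
  ((w == senum [set x in w]) : nat)%:R * (((([set x in w] \subset K :|: L) : nat)%:R) *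
  ((((((K :\: [set x in w]) \in powerset K) && odd #|K :\: [set x in w]|) &&
     (((L :\: [set x in w]) \in powerset L) && odd #|L :\: [set x in w]|)) : nat)%:R
   * (coef q K (K :\: [set x in w]) * coef q L (L :\: [set x in w])))).
Proof.
set X0 := [set x in w]; set e := ((w == senum X0) : nat)%:R.
rewrite tau_mul.
rewrite (eq_bigr (fun I => \sum_(I' in powerset L | odd #|I'|) e * (coef q K I * coef q L I' * (( (K :\: I) :|: (L :\: I') == X0) : nat)%:R))); last first.
  move=> I _; apply: eq_bigr => I' _.
  rewrite tmon_mul -senum_cat; last first.
    by move=> a b; rewrite !inE => /andP [_ aK] /andP [_ bL]; apply: HKL.
  by rewrite extract -/X0 -/e mulrCA.
under eq_bigr do rewrite -mulr_sumr.
rewrite -mulr_sumr; congr (_ * _).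
case: (boolP (X0 \subset K :|: L)) => hX; last first.
  rewrite mul0r big1 // => I _; rewrite big1 // => I' _.
  have -> : ((K :\: I) :|: (L :\: I') == X0) = false.
    apply/negbTE; apply: contra hX => /eqP <-; apply: setUSS; exact: subsetDl.
  by rewrite mulr0.
rewrite mul1r.
rewrite (eq_bigr (fun I => \sum_(I' in powerset L | odd #|I'|) (coef q K I * ((I == K :\: X0) : nat)%:R * coef q L I') * ((I' == L :\: X0) : nat)%:R)); last first.
  move=> I /andP [HI _]; apply: eq_bigr => I' /andP [HI' _].
  rewrite powersetE in HI; rewrite powersetE in HI'.
  rewrite (setS1 (dKL HKL) HI HI' hX).
  rewrite -mulnb natrM; move: ((I == _) : nat)%:R => a; move: ((I' == _) : nat)%:R => b.
  ring.
under eq_bigr do rewrite pick_sum.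
rewrite (eq_bigr (fun I => ((((L :\: X0 \in powerset L) && odd #|L :\: X0|) : nat)%:R * coef q K I * coef q L (L :\: X0)) * ((I == K :\: X0) : nat)%:R)); last first.
  move=> I _; move: (_ %:R) => a; move: (_ %:R) => b; ring.
rewrite pick_sum.
move: (K :\: X0 \in powerset K) (odd #|K :\: X0|) (L :\: X0 \in powerset L) (odd #|L :\: X0|) => b1 b2 b3 b4.
by case: b1; case: b2; case: b3; case: b4; rewrite /= ?mulr1n ?mulr0n ?(mul0r, mul1r, mulr0, mulr1).
Qed.

Lemma rhs_eq (s : seq S) (sg : S -> R) w : (forall k, k \in s -> k \in K :|: L) ->
  \sum_(k <- s) sg k * tauminus q ((K :|: L) :\ k) w =
  ((w == senum [set x in w]) : nat)%:R * (((([set x in w] \subset K :|: L) : nat)%:R) *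
  \sum_(k <- s) sg k * ((((k \in (K :\: [set x in w]) :|: (L :\: [set x in w])) : nat)%:R) *
     ((((((K :\: [set x in w]) :|: (L :\: [set x in w])) :\ k \in powerset ((K :|: L) :\ k))
        && odd #|((K :\: [set x in w]) :|: (L :\: [set x in w])) :\ k|) : nat)%:R
      * coef q ((K :|: L) :\ k) (((K :\: [set x in w]) :|: (L :\: [set x in w])) :\ k)))).
Proof.
move=> sM.
set X0 := [set x in w]; set e := ((w == senum X0) : nat)%:R.
rewrite (eq_big_seq (fun k => e * (sg k * \sum_(I in powerset ((K :|: L) :\ k) | odd #|I|) coef q ((K :|: L) :\ k) I * ((((K :|: L) :\ k) :\: I == X0) : nat)%:R))); last first.
  move=> k _; rewrite tauE.
  under eq_bigr do rewrite tmonE extract -/X0 -/e mulrCA.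
  by rewrite -mulr_sumr mulrCA.
rewrite -mulr_sumr; congr (_ * _).
case: (boolP (X0 \subset K :|: L)) => hX; last first.
  rewrite mul0r big1_seq // => k _; rewrite big1 ?mulr0 // => I _.
  have -> : (((K :|: L) :\ k) :\: I == X0) = false.
    apply/negbTE; apply: contra hX => /eqP <-; apply: (subset_trans (subsetDl _ _)); exact: subsetDl.
  by rewrite mulr0.
rewrite mul1r; apply: eq_big_seq => k ks; congr (sg k * _).
have kM := sM k ks.
rewrite (eq_bigr (fun I => ((k \in (K :|: L) :\: X0) : nat)%:R * coef q ((K :|: L) :\ k) I * ((I == ((K :|: L) :\: X0) :\ k) : nat)%:R)); last first.
  move=> I /andP [HI _]; rewrite powersetE in HI.
  rewrite (setS2 kM HI hX) -mulnb natrM; move: (_ %:R) => a; move: (_ %:R) => b; ring.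
rewrite pick_sum setDUl; move: (_ %:R) => a; move: (_ %:R) => b; ring.
Qed.

End Main.

Unset Implicit Arguments.
Local Open Scope ring_scope.

Theorem lemma3p2 (d : Order.disp_t) (S : finOrderType d) (R : comPzRingType)
  (q : R) (K L : {set S}) :
  (forall k l : S, k \in K -> l \in L -> (k < l)%O) ->
  FAmul (tauminus q K) (tauminus q L)
    = (fun w => \sum_(k <- senum K)
         (-1) ^+ (#|K| - (index k (senum K)).+1) * tauminus q ((K :|: L) :\ k) w)
  /\
  FAmul (tauminus q K) (tauminus q L)
    = (fun w => \sum_(l <- senum L)
         (-1) ^+ (index l (senum L)) * tauminus q ((K :|: L) :\ l) w).
Proof.
move=> HKL; split; apply: functional_extensionality => w.
  rewrite lhs_eq // rhs_eq //; last by move=> k; rewrite mem_senum inE => ->.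
  by rewrite (core1 q HKL (subsetDl K _) (subsetDl L _)).
rewrite lhs_eq // rhs_eq //; last by move=> k; rewrite mem_senum inE => ->; rewrite orbT.
by rewrite (core2 q HKL (subsetDl K _) (subsetDl L _)).
Qed.
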